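(* (i) Let $L,L'$ be simplicial complexes and $\varphi_i,\varphi'_i: L\to L'$ simplicial maps for $i=1,\dots,m$. If $\varphi_i\sim\varphi'_i$ for each $i$, then $\mathrm{SD}(\varphi_1,\dots,\varphi_m)=\mathrm{SD}(\varphi'_1,\dots,\varphi'_m)$. (ii) Let $\varphi_i: L\to L'$ be simplicial maps for $i=1,\dots,m$. If $L$ or $L'$ is strongly collapsible, then $\mathrm{SD}(\varphi_1,\dots,\varphi_m)=0$.
   Context: Simplicial complexes are abstract simplicial complexes; simplicial maps send simplices to simplices. Simplicial maps $f,g: K\to K'$ are contiguous if $f(\sigma)\cup g(\sigma)$ is a simplex of $K'$ for every simplex $\sigma$ of $K$; $f\sim g$ (same contiguity class) if there is a finite chain $f=f_0,\dots,f_n=g$ of simplicial maps with consecutive ones contiguous. For simplicial maps $\varphi_1,\dots,\varphi_m: K\to K'$, the higher contiguity distance $\mathrm{SD}(\varphi_1,\dots,\varphi_m)$ is the least $n\ge0$ such that $K$ is a union of subcomplexes $K_0,\dots,K_n$ with $\varphi_i|_{K_k}\sim\varphi_j|_{K_k}$ for all $i,j\in\{1,\dots,m\}$ and $k=0,\dots,n$. A simplicial complex $L$ is strongly collapsible if it has the same strong homotopy type as a single vertex $v$, i.e. there are simplicial maps $f: L\to\{v\}$, $g:\{v\}\to L$ with $f\circ g\sim 1$ and $g\circ f\sim 1_L$. Complexes are assumed edge-path connected. *)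

(* Defs.v *)
From Stdlib Require Import Relations.
From mathcomp Require Import all_boot.
Set Implicit Arguments. Unset Strict Implicit. Unset Printing Implicit Defensive.

(* A (finite) abstract simplicial complex with vertices in a finType V is a
   set K of nonempty finite subsets of V closed under nonempty subsets.
   Its vertices are the v with [set v] \in K. *)
Definition is_complex (V : finType) (K : {set {set V}}) : Prop :=
  (forall s, s \in K -> s != set0) /\
  (forall s t : {set V}, s \in K -> t \subset s -> t != set0 -> t \in K).

Definition subcomplex (V : finType) (K0 K : {set {set V}}) : Prop :=
  is_complex K0 /\ K0 \subset K.

Definition simplicial (V W : finType) (K : {set {set V}}) (K' : {set {set W}})
  (f : V -> W) : Prop :=
  forall s, s \in K -> f @: s \in K'.

Definition contiguous (V W : finType) (K : {set {set V}}) (K' : {set {set W}})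
  (f g : V -> W) : Prop :=
  simplicial K K' f /\ simplicial K K' g /\
  forall s, s \in K -> (f @: s) :|: (g @: s) \in K'.

(* same contiguity class: finite chain of pairwise contiguous maps
   (only the values on vertices of K matter) *)
Definition contig_class (V W : finType) (K : {set {set V}}) (K' : {set {set W}})
  (f g : V -> W) : Prop :=
  clos_refl_trans (V -> W) (contiguous K K') f g.

(* SD(phi_1,...,phi_m) <= n : K is a union of n+1 subcomplexes K_0..K_n
   on each of which all the restrictions phi_i|K_k are in the same class *)
Definition SD_le (V W : finType) (K : {set {set V}}) (K' : {set {set W}})
  (m : nat) (phi : 'I_m -> V -> W) (n : nat) : Prop :=
  exists Ks : 'I_n.+1 -> {set {set V}},
    (forall k, subcomplex (Ks k) K) /\
    K = \bigcup_(k < n.+1) Ks k /\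
    (forall i j k, contig_class (Ks k) K' (phi i) (phi j)).

Definition SD_eq (V W : finType) (K : {set {set V}}) (K' : {set {set W}})
  (m : nat) (phi : 'I_m -> V -> W) (n : nat) : Prop :=
  SD_le K K' phi n /\ (forall n', SD_le K K' phi n' -> n <= n').

Definition edge_connected (V : finType) (K : {set {set V}}) : Prop :=
  forall u w, [set u] \in K -> [set w] \in K ->
    connect (fun a b => [set a; b] \in K) u w.

Definition point_complex : {set {set unit}} := [set [set tt]].

(* strongly collapsible: same strong homotopy type as a single vertex *)
Definition strongly_collapsible (V : finType) (L : {set {set V}}) : Prop :=
  exists (f : V -> unit) (g : unit -> V),
    simplicial L point_complex f /\ simplicial point_complex L g /\
    contig_class point_complex point_complex (f \o g) id /\
    contig_class L L (g \o f) id.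

(* Main.v *)
Require Import Defs.
From mathcomp Require Import all_boot.
From Stdlib Require Import Relations FunctionalExtensionality.
Set Implicit Arguments. Unset Strict Implicit.

Lemma crt_map (A B : Type) (R : relation A) (S : relation B) (F : A -> B) :
  (forall x y, R x y -> S (F x) (F y)) ->
  forall x y, clos_refl_trans A R x y -> clos_refl_trans B S (F x) (F y).
Proof.
move=> H x y; elim=> [a b /H|a|a b c _ IH1 _ IH2].
- by apply: rt_step.
- by apply: rt_refl.
- exact: rt_trans IH1 IH2.
Qed.

Lemma crt_sym (A : Type) (R : relation A) :
  (forall x y, R x y -> R y x) ->
  forall x y, clos_refl_trans A R x y -> clos_refl_trans A R y x.
Proof.
move=> H x y; elim=> [a b /H|a|a b c _ IH1 _ IH2].
- by apply: rt_step.
- by apply: rt_refl.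
- exact: rt_trans IH2 IH1.
Qed.

Lemma contiguous_sym (V W : finType) (K : {set {set V}}) (K' : {set {set W}}) f g :
  contiguous K K' f g -> contiguous K K' g f.
Proof. by case=> [h1 [h2 h3]]; split=> //; split=> // s /h3; rewrite setUC. Qed.

Lemma contig_sym (V W : finType) (K : {set {set V}}) (K' : {set {set W}}) f g :
  contig_class K K' f g -> contig_class K K' g f.
Proof. apply: crt_sym; exact: contiguous_sym. Qed.

Lemma contig_trans (V W : finType) (K : {set {set V}}) (K' : {set {set W}}) f g h :
  contig_class K K' f g -> contig_class K K' g h -> contig_class K K' f h.
Proof. exact: rt_trans. Qed.

Lemma contig_sub (V W : finType) (K0 K : {set {set V}}) (K' : {set {set W}}) f g :
  K0 \subset K -> contig_class K K' f g -> contig_class K0 K' f g.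
Proof.
move=> sub H.
have HH := @crt_map _ _ (contiguous K K') (contiguous K0 K') (fun h : V -> W => h).
apply: (HH _ f g H) => x y [h1 [h2 h3]].
have hs s : s \in K0 -> s \in K by move=> hs; apply: (subsetP sub).
split; [|split]; move=> s /hs hs'; [exact: (h1 s hs')|exact: (h2 s hs')|exact: (h3 s hs')].
Qed.

Lemma comp_right (U V W : finType) (K : {set {set U}}) (K' : {set {set V}})
  (K'' : {set {set W}}) (p : V -> W) h h' :
  simplicial K' K'' p -> contig_class K K' h h' ->
  contig_class K K'' (p \o h) (p \o h').
Proof.
move=> sp H.
have HH := @crt_map _ _ (contiguous K K') (contiguous K K'') (fun h : U -> V => p \o h).
apply: (HH _ h h' H) => x y [h1 [h2 h3]].
split; [|split]=> s hs.
- rewrite (imset_comp p x); exact: (sp _ (h1 s hs)).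
- rewrite (imset_comp p y); exact: (sp _ (h2 s hs)).
- rewrite (imset_comp p x) (imset_comp p y) -imsetU; exact: (sp _ (h3 s hs)).
Qed.

Lemma comp_left (U V W : finType) (K : {set {set U}}) (K' : {set {set V}})
  (K'' : {set {set W}}) (p : U -> V) h h' :
  simplicial K K' p -> contig_class K' K'' h h' ->
  contig_class K K'' (h \o p) (h' \o p).
Proof.
move=> sp H.
have HH := @crt_map _ _ (contiguous K' K'') (contiguous K K'') (fun h : V -> W => h \o p).
apply: (HH _ h h' H) => x y [h1 [h2 h3]].
split; [|split]=> s hs.
- rewrite (imset_comp x p); exact: (h1 _ (sp s hs)).
- rewrite (imset_comp y p); exact: (h2 _ (sp s hs)).
- rewrite (imset_comp x p) (imset_comp y p); exact: (h3 _ (sp s hs)).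
Qed.

Lemma imset_cst (V W : finType) (s : {set V}) (a : W) :
  s != set0 -> [set (fun _ : V => a) x | x in s] = [set a].
Proof.
case/set0Pn=> x xs; apply/setP=> y; rewrite in_set1.
apply/imsetP/eqP=> [[z _ ->]//|->]; by exists x.
Qed.

Lemma const_path (V W : finType) (K : {set {set V}}) (K' : {set {set W}}) (a b : W) :
  is_complex K -> is_complex K' -> [set a] \in K' ->
  connect (fun a b => [set a; b] \in K') a b ->
  contig_class K K' (fun _ => a) (fun _ => b).
Proof.
move=> [cK1 cK2] [cK'1 cK'2] ha /connectP [p].
elim: p a ha => [|c p IH] a ha /=; first by move=> _ ->; apply: rt_refl.
case/andP=> hac hp hb.
have hc : [set c] \in K'.
  by apply: (cK'2 _ _ hac); [rewrite sub1set !inE eqxx orbT|apply/set0Pn; exists c; rewrite inE].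
apply: rt_trans (IH c hc hp hb); apply: rt_step.
split; [|split]=> s hs; rewrite !imset_cst ?cK1 //.
Qed.

Theorem proposition3p5 :
  (forall (V W : finType) (L : {set {set V}}) (L' : {set {set W}})
     (m : nat) (phi phi' : 'I_m -> V -> W),
     is_complex L -> is_complex L' -> edge_connected L -> edge_connected L' ->
     (forall i, simplicial L L' (phi i)) ->
     (forall i, simplicial L L' (phi' i)) ->
     (forall i, contig_class L L' (phi i) (phi' i)) ->
     forall n, SD_eq L L' phi n <-> SD_eq L L' phi' n)
  /\
  (forall (V W : finType) (L : {set {set V}}) (L' : {set {set W}})
     (m : nat) (phi : 'I_m -> V -> W),
     is_complex L -> is_complex L' -> edge_connected L -> edge_connected L' ->
     (forall i, simplicial L L' (phi i)) ->
     strongly_collapsible L \/ strongly_collapsible L' ->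
     SD_eq L L' phi 0).
Proof.
split.
  move=> V W L L' m phi phi' _ _ _ _ _ _ hc.
  have key (ps ps' : 'I_m -> V -> W) :
      (forall i, contig_class L L' (ps i) (ps' i)) ->
      forall n, SD_le L L' ps n -> SD_le L L' ps' n.
    move=> hpp n [Ks [hK [hU hcl]]]; exists Ks; split=> //; split=> // i j k.
    have sk : Ks k \subset L by case: (hK k).
    exact: contig_trans (contig_trans (contig_sub sk (contig_sym (hpp i))) (hcl i j k)) (contig_sub sk (hpp j)).
  have hc' i : contig_class L L' (phi' i) (phi i) by apply: contig_sym.
  move=> n; split; case=> h1 h2; split.
  - exact: key hc n h1.
  - by move=> n' /(key _ _ hc'); apply: h2.
  - exact: key hc' n h1.
  - by move=> n' /(key _ _ hc); apply: h2.
move=> V W L L' m phi cL cL' _ eL' sphi hcol.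
split=> // ; exists (fun _ => L); split; first by move=> k; split.
split; first by rewrite big_ord_recl big_ord0 setU0.
move=> i j _.
case: hcol => [[f [g [sf [sg [_ hgf]]]]]|[f [g [sf [sg [_ hgf]]]]]].
- have hgt : [set g tt] \in L by rewrite -imset_set1; apply: sg; rewrite inE.
  have E k : (phi k) \o (g \o f) = (fun _ => phi k (g tt)).
    by apply: functional_extensionality => x /=; case: (f x).
  have Hk k : contig_class L L' (phi k) (fun _ => phi k (g tt)).
    rewrite -(E k); apply: contig_sym; exact: comp_right (sphi k) hgf.
  have va k : [set phi k (g tt)] \in L' by rewrite -imset_set1; apply: sphi.
  apply: contig_trans (Hk i) _; apply: contig_trans (contig_sym (Hk j)).
  apply: const_path => //; exact: eL'.
- have E k : (g \o f) \o phi k = (fun _ => g tt).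
    by apply: functional_extensionality => x /=; case: (f _).
  have Hk k : contig_class L L' (phi k) (fun _ => g tt).
    rewrite -(E k); apply: contig_sym; exact: comp_left (sphi k) hgf.
  exact: contig_trans (Hk i) (contig_sym (Hk j)).
Qed.
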